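(* For every prime power $q$, all integers $n$, $r\le\lfloor n/2\rfloor$ and $0<\rho<r$, $$K_{\mathrm{C}}(q,n,r,\rho)\le \left\{1 - \log_{{n\brack r}}\left({n\brack r} - V_{\mathrm{C}}(\rho)\right)\right\}^{-1} + 1.$$
   Context: ${m\brack k}=\prod_{i=0}^{k-1}\frac{q^m-q^i}{q^k-q^i}$ is the Gaussian binomial. $N_{\mathrm{C}}(d) = q^{d^2}{r\brack d}{n-r \brack d}$ and $V_{\mathrm{C}}(t)=\sum_{d=0}^t N_{\mathrm{C}}(d)$. $E_r(q,n)$ is the set of $r$-dimensional subspaces of $\mathrm{GF}(q)^n$ with injection distance $d_{\mathrm{I}}(U,V)=\dim(U+V)-\min\{\dim U,\dim V\}$; the covering radius of a nonempty $\mathcal{C}\subseteq E_r(q,n)$ is $\max_U\min_{C\in\mathcal{C}}d_{\mathrm{I}}(U,C)$, and $K_{\mathrm{C}}(q,n,r,\rho)$ is the minimum cardinality of a subset of $E_r(q,n)$ with covering radius at most $\rho$. *)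

(* Defs.v *)
From HB Require Import structures.
From mathcomp Require Import all_boot all_order all_algebra.
From mathcomp Require Import all_classical all_reals exp.
Set Implicit Arguments. Unset Strict Implicit. Unset Printing Implicit Defensive.
Import Order.TTheory GRing.Theory Num.Theory.

Local Open Scope ring_scope.

Definition gauss_binom (R : realType) (q m k : nat) : R :=
  \prod_(i < k) ((q%:R ^+ m - q%:R ^+ i) / (q%:R ^+ k - q%:R ^+ i)).

Definition NC (R : realType) (q n r d : nat) : R :=
  (q%:R ^+ (d * d)%N) * gauss_binom R q r d * gauss_binom R q (n - r) d.

Definition VC (R : realType) (q n r t : nat) : R :=
  \sum_(0 <= d < t.+1) NC R q n r d.

Definition logb (R : realType) (b x : R) : R := ln x / ln b.

Local Close Scope ring_scope.

(* Subspaces of GF(q)^n are represented by their canonical generator matrices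
   <<U>>%MS : 'M[F]_n (rows span the subspace); \rank U is the dimension. *)
Definition Er (F : finFieldType) (n r : nat) : {set 'M[F]_n} :=
  [set U : 'M[F]_n | (<<U>>%MS == U) && (\rank U == r)].

Definition dI (F : finFieldType) (n : nat) (U V : 'M[F]_n) : nat :=
  \rank (U + V)%MS - minn (\rank U) (\rank V).

(* covering radius of a (nonempty) C within E_r(q,n):
   max_{U in E_r} min_{c in C} d_I(U,c)  (the default n of the inner min is
   harmless since d_I <= n). *)
Definition covrad (F : finFieldType) (n r : nat) (C : {set 'M[F]_n}) : nat :=
  \max_(U in Er F n r) \big[minn/n]_(c in C) dI U c.

(* K_C(q,n,r,rho): minimum cardinality of a nonempty C subset of E_r(q,n) with
   covering radius at most rho (default #|E_r| is irrelevant whenever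
   r <= n, since E_r itself then has covering radius 0). *)
Definition KC (F : finFieldType) (n r rho : nat) : nat :=
  \big[minn/#|Er F n r|]_(C in powerset (Er F n r) |
                            (C != finset.set0) && (covrad r C <= rho)) #|C|.

(* Main.v *)
Require Import Defs.
From HB Require Import structures.
From mathcomp Require Import all_boot all_order all_algebra.
From mathcomp Require Import all_classical all_reals exp.
Import Order.TTheory GRing.Theory Num.Theory.
Set Implicit Arguments. Unset Strict Implicit. Unset Printing Implicit Defensive.
From Stdlib Require Import Lia.
From mathcomp Require Import zify ring lra.
Import Order.TTheory GRing.Theory Num.Theory.

Section Count.
Variable F : finFieldType.
Variable n : nat.
Local Notation q := #|F|.

Lemma card_subrow m (A : 'M[F]_(m, n)) :
  #|[set v : 'rV[F]_n | (v <= A)%MS]| = (q ^ \rank A)%N.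
Proof.
rewrite -[\rank A]mul1n -card_mx.
have injA: injective (mulmxr (row_base A)).
  have /row_freeP[A' A'K] := row_base_free A.
  by move=> ?; apply: can_inj (mulmxr A') _ => u; rewrite /= -mulmxA A'K mulmx1.
rewrite -(fintype.card_image (injA _)); apply: eq_card => v.
by rewrite inE -(eq_row_base A) (sameP submxP codomP).
Qed.
End Count.
Section Count2.
Variable F : finFieldType.
Variable n : nat.

Lemma rank_step (S : 'M[F]_n) m (D : 'M[F]_(m,n)) (v : 'rV[F]_n) :
 (\rank (S + (col_mx v D : 'M_(m.+1, n)))%MS == \rank S + m.+1)%N =
 (\rank (S + D)%MS == \rank S + m)%N && ~~ (v <= S + D)%MS.
Proof.
have E: (S + col_mx v D :=: (S + D) + v)%MS.
  apply/eqmxP/andP; split.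
    rewrite addsmx_sub col_mx_sub.
    rewrite (submx_trans (addsmxSl S D) (addsmxSl _ _)) addsmxSr /=.
    by rewrite (submx_trans (addsmxSr S D) (addsmxSl _ _)).
  have h := addsmxSr S (col_mx v D).
  rewrite !addsmx_sub addsmxSl /=.
  have hc: (col_mx v D <= S + col_mx v D)%MS by [].
  move: hc; rewrite col_mx_sub => /andP[-> ->]; done.
rewrite E.
have h1: (\rank (S + D)%MS <= \rank S + m)%N.
  by apply: leq_trans (mxrank_adds_leqif S D) _; rewrite leq_add2l rank_leq_row.
have h2: (\rank ((S + D) + v)%MS <= \rank (S + D)%MS + 1)%N.
  by apply: leq_trans (mxrank_adds_leqif _ v) _; rewrite leq_add2l rank_leq_row.
have h3 := mxrank_leqif_sup (addsmxSl (S + D)%MS v).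
case: (boolP (v <= S + D)%MS) => hv.
  have e: (((S + D) + v)%MS :=: (S + D))%MS by apply/addsmx_idPl.
  rewrite e andbF; apply/negbTE; rewrite neq_ltn.
  by rewrite addnS ltnS h1.
have h4: (\rank (S + D)%MS < \rank ((S + D) + v)%MS)%N.
  rewrite (ltn_leqif h3) addsmx_sub submx_refl /=; exact: hv.
have e: \rank ((S + D) + v)%MS = (\rank (S + D)%MS).+1.
  by move: h2; rewrite addn1 => h2'; apply/anti_leq; rewrite h2' h4.
by rewrite e andbT addnS eqSS.
Qed.
End Count2.
Section Count3.
Variable F : finFieldType.
Variable n : nat.
Local Notation q := #|F|.

Definition Xset (S T : 'M[F]_n) m :=
  [set A : 'M[F]_(m,n) | (A <= T)%MS && (\rank (S + A)%MS == \rank S + m)%N].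

Lemma card_vecs (X T : 'M[F]_n) : (X <= T)%MS ->
  #|[set v : 'rV[F]_n | (v <= T)%MS && ~~ (v <= X)%MS]| = (q ^ \rank T - q ^ \rank X)%N.
Proof.
move=> sXT.
have -> : [set v : 'rV[F]_n | (v <= T)%MS && ~~ (v <= X)%MS] =
   [set v : 'rV[F]_n | (v <= T)%MS] :\: [set v : 'rV[F]_n | (v <= X)%MS].
  by apply/setP => v; rewrite !inE andbC.
rewrite cardsD !card_subrow.
have -> : [set v : 'rV[F]_n | (v <= T)%MS] :&: [set v : 'rV[F]_n | (v <= X)%MS]
   = [set v : 'rV[F]_n | (v <= X)%MS].
  apply/setP => v; rewrite !inE; case: (boolP (v <= X)%MS) => h; last by rewrite andbF.
  by rewrite (submx_trans h sXT).
by rewrite card_subrow.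
Qed.

Lemma col_sub1 m (v : 'rV[F]_n) (D : 'M[F]_(m,n)) (T : 'M[F]_n) :
  ((col_mx v D : 'M_(m.+1,n)) <= T)%MS = (v <= T)%MS && (D <= T)%MS.
Proof. exact: (@col_mx_sub F 1 m n v D n T). Qed.

Lemma card_Xset (S T : 'M[F]_n) m : (S <= T)%MS ->
  #|Xset S T m| = (\prod_(j < m) (q ^ \rank T - q ^ (\rank S + j)))%N.
Proof.
move=> sST; elim: m => [|m IH].
  rewrite big_ord0 (@fintype.eq_card1 _ (0%R : 'M[F]_(0, n))) // => A.
  rewrite !inE [A]flatmx0 sub0mx addn0 /=.
  by rewrite (@addsmx0 F n 0 n S) !eqxx.
rewrite big_ord_recr /= -IH -[#|Xset S T m.+1|]sum1_card.
rewrite (partition_big (fun A : 'M[F]_(1 + m, n) => dsubmx A) (mem (Xset S T m))) /=;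
  last first.
  move=> A; rewrite !inE -(vsubmxK A); move: (usubmx A) (dsubmx A) => v D.
  rewrite col_mxKd => /andP[hA hr]; move: hA; rewrite col_sub1 => /andP[_ ->].
  by move: hr; rewrite rank_step => /andP[-> _].
rewrite -sum_nat_const; apply: eq_bigr => D; rewrite inE => /andP[sDT rD].
rewrite (reindex (fun v : 'rV[F]_n => col_mx v D)) /=; last first.
  exists usubmx => [v _ | A]; first by rewrite col_mxKu.
  by rewrite inE => /andP[_ /eqP <-]; rewrite vsubmxK.
rewrite -(eqP rD) -card_vecs; last by rewrite addsmx_sub sST.
rewrite -sum1_card; apply: eq_bigl => v.
rewrite !inE col_mxKd eqxx andbT col_sub1 sDT andbT rank_step rD /=.
done.
Qed.
End Count3.
Section CountEr.
Variable F : finFieldType.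
Variable n : nat.
Local Notation q := #|F|.


Lemma fiber_Er r (W : 'M[F]_n) (A : 'M[F]_(r, n)) : W \in Er F n r ->
  \rank A = r -> (<<A>>%MS == W) = (A <= W)%MS.
Proof.
rewrite inE => /andP[/eqP gW /eqP rW] rA.
apply/idP/idP => [/eqP <- | sAW]; first by rewrite genmxE.
have e : (A == W)%MS.
  by rewrite -(geq_leqif (mxrank_leqif_eq sAW)) rA rW.
by rewrite -gW; apply/eqP/eq_genmx/eqmxP.
Qed.

Lemma card_Er r : (#|Er F n r| * \prod_(j < r) (q ^ r - q ^ j) =
   \prod_(j < r) (q ^ n - q ^ j))%N.
Proof.
have r0 : \rank (0%R : 'M[F]_n) = 0%N by rewrite mxrank0.
have -> : (\prod_(j < r) (q ^ n - q ^ j) = #|Xset (0%R : 'M[F]_n) (1%:M)%R r|)%N.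
  rewrite card_Xset ?sub0mx // mxrank1 r0; done.
rewrite -[#|Xset _ _ r|]sum1_card (partition_big (fun A : 'M[F]_(r,n) => <<A>>%MS) (mem (Er F n r))) /=;
  last first.
  move=> A; rewrite !inE (@adds0mx F n r n A) genmx_id eqxx /= mxrank_gen r0 add0n.
  by case/andP.
rewrite -sum_nat_const; apply: eq_bigr => W hW.
have := hW; rewrite inE => /andP[_ /eqP rW].
transitivity #|Xset 0%R W r|.
  by rewrite card_Xset ?sub0mx // rW r0; apply: eq_bigr => j _; rewrite add0n.
rewrite -sum1_card.
apply: eq_bigl => A; rewrite !inE submx1 /= (@adds0mx F n r n A) r0 add0n.
case: (boolP (\rank A == r)) => /= hr; last by rewrite andbF.
by rewrite andbT fiber_Er // (eqP hr).
Qed.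
End CountEr.
Section CountBall.
Variable F : finFieldType.
Variable n r : nat.
Local Notation q := #|F|.


Variable U : 'M[F]_n.
Hypothesis UE : U \in Er F n r.
Variable d : nat.
Hypothesis ldr : (d <= r)%N.

Lemma rU : \rank U = r.
Proof. by move: UE; rewrite inE => /andP[_ /eqP]. Qed.

Definition Sd := [set W in Er F n r | dI U W == d].
Definition Xd := finset.setX (Xset (0%R : 'M[F]_n) U (r - d)) (Xset U (1%:M)%R d).
Definition fd (p : 'M[F]_(r - d, n) * 'M[F]_(d, n)) : 'M[F]_n :=
  <<(col_mx p.1 p.2 : 'M_(r - d + d, n))>>%MS.

Lemma Xd_facts p : p \in Xd ->
  [/\ (p.1 <= U)%MS, \rank p.1 = (r - d)%N, \rank p.2 = d &
      \rank (U :&: p.2)%MS = 0%N].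
Proof.
rewrite !inE => /andP[/andP[s1 r1] /andP[_ r2]].
move: r1; rewrite (@adds0mx F n (r - d) n p.1) mxrank0 add0n => /eqP r1.
have := mxrank_sum_cap U p.2; rewrite (eqP r2).
have := rank_leq_row p.2.
move=> h e; split => //.
  by apply/anti_leq; rewrite h /=; move: e; rewrite -addnA => /addnI <-; rewrite leq_addr.
by move: e => /eqP; rewrite -addnA eqn_add2l => /eqP e; move: h; rewrite -e; lia.
Qed.

Lemma fd_facts p : p \in Xd -> fd p \in Sd.
Proof.
move=> pX; have [s1 r1 r2 c2] := Xd_facts pX.
have rc : \rank (fd p) = r.
  rewrite /fd mxrank_gen -addsmxE.
  have e := mxrank_sum_cap p.1 p.2.
  have c12 : \rank (p.1 :&: p.2)%MS = 0%N.
    apply/eqP; rewrite -leqn0 -c2; apply: mxrankS.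
    by rewrite sub_capmx capmxSr andbT (submx_trans (capmxSl _ _) s1).
  by move: e; rewrite c12 addn0 r1 r2 subnK.
have eU : ((U + fd p)%MS :=: (U + p.2)%MS)%MS.
  apply/eqmxP/andP; split.
    rewrite addsmx_sub addsmxSl /= /fd genmxE -addsmxE addsmx_sub addsmxSr andbT.
    exact: submx_trans s1 (addsmxSl _ _).
  rewrite addsmx_sub addsmxSl /=; apply: submx_trans (addsmxSr _ _).
  by rewrite /fd genmxE -addsmxE addsmxSr.
have rUp : \rank (U + p.2)%MS = (r + d)%N.
  have := mxrank_sum_cap U p.2; rewrite c2 addn0 rU r2; done.
rewrite !inE /dI eU rUp rc rU minnn.
by rewrite /fd genmx_id !eqxx /= addKn.
Qed.

Lemma Sd_facts W : W \in Sd ->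
  [/\ <<W>>%MS = W, \rank W = r, \rank (U + W)%MS = (r + d)%N &
      \rank (U :&: W)%MS = (r - d)%N].
Proof.
rewrite !inE => /andP[/andP[/eqP gW /eqP rW] /eqP dW].
move: dW; rewrite /dI rW rU minnn => dW.
have h : (r <= \rank (U + W)%MS)%N by rewrite -{1}rU mxrankS // addsmxSl.
have e : \rank (U + W)%MS = (r + d)%N by rewrite -dW subnKC.
split => //.
have := mxrank_sum_cap U W; rewrite e rU rW => e2.
move: e2 ldr; clear; lia.
Qed.

Lemma fiber_sub W p : W \in Sd -> p \in Xd -> fd p = W ->
  p \in finset.setX (Xset 0%R (U :&: W)%MS (r - d)) (Xset (U :&: W)%MS W d).
Proof.
move=> WS pX fW; have [s1 r1 r2 c2] := Xd_facts pX.
have [gW rW rUW rcap] := Sd_facts WS.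
have sW1 : (p.1 <= W)%MS by rewrite -fW /fd genmxE -addsmxE addsmxSl.
have sW2 : (p.2 <= W)%MS by rewrite -fW /fd genmxE -addsmxE addsmxSr.
rewrite !inE sub_capmx s1 sW1 sW2 /=.
move: pX; rewrite !inE => /andP[/andP[_ ->] _] /=.
have := mxrank_sum_cap (U :&: W)%MS p.2.
have -> : \rank ((U :&: W) :&: p.2)%MS = 0%N.
  apply/eqP; rewrite -leqn0 -c2; apply: mxrankS.
  by rewrite sub_capmx capmxSr andbT (submx_trans (capmxSl _ _) (capmxSl _ _)).
by rewrite addn0 r2 => ->.
Qed.

Definition Fd := (\prod_(j < r - d) (q ^ (r - d) - q ^ j) *
                 \prod_(j < d) (q ^ r - q ^ (r - d + j)))%N.

Lemma card_fiber W : W \in Sd ->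
  #|[set p in Xd | fd p == W]| <= Fd.
Proof.
move=> WS; have [gW rW rUW rcap] := Sd_facts WS.
apply: leq_trans (subset_leq_card (_ : _ \subset
   finset.setX (Xset 0%R (U :&: W)%MS (r - d)) (Xset (U :&: W)%MS W d))) _.
  by apply/fintype.subsetP => p; rewrite inE => /andP[pX /eqP fW]; apply: fiber_sub.
rewrite cardsX !card_Xset ?sub0mx ?capmxSr // rW rcap mxrank0 /Fd.
by under eq_bigr do rewrite add0n.
Qed.

Lemma card_Xd : #|Xd| =
  (\prod_(j < r - d) (q ^ r - q ^ j) * \prod_(j < d) (q ^ n - q ^ (r + j)))%N.
Proof.
rewrite cardsX !card_Xset ?sub0mx ?submx1 // mxrank1 mxrank0 rU.
by under eq_bigr do rewrite add0n.
Qed.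

Lemma Xd_le : (#|Xd| <= #|Sd| * Fd)%N.
Proof.
rewrite -sum1_card (partition_big fd (mem Sd)) /=; last by move=> p; apply: fd_facts.
rewrite -sum_nat_const; apply: leq_sum => W WS.
apply: leq_trans (card_fiber WS); rewrite -sum1_card.
by apply: eq_leq; apply: eq_bigl => p; rewrite inE.
Qed.
End CountBall.

Section Alg.
Variable R : fieldType.
Variable x : R.
Hypothesis x0 : (x != 0)%R.
Local Open Scope ring_scope.

Definition Pp (t a m : nat) : R := \prod_(j < m) (x ^+ t - x ^+ (a + j)).
Definition Pr (t m : nat) : R := \prod_(j < m) (x ^+ t - x ^+ j).

Lemma Pshift t k l : (k <= t)%N -> Pp t k l = x ^+ (k * l) * Pr (t - k) l.
Proof.
move=> kt; rewrite /Pp /Pr.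
have -> : \prod_(j < l) (x ^+ t - x ^+ (k + j)) = \prod_(j < l) (x ^+ k * (x ^+ (t - k) - x ^+ j)).
  apply: eq_bigr => j _; rewrite mulrBr -!exprD subnKC //.
by rewrite big_split /= prodr_const card_ord exprM.
Qed.

Lemma Psplit t k l : (k <= t)%N -> Pr t (k + l) = Pr t k * x ^+ (k * l) * Pr (t - k) l.
Proof.
move=> kt; rewrite /Pr big_split_ord /= -mulrA; congr (_ * _).
by rewrite -Pshift.
Qed.

Lemma Psym r d : (d <= r)%N -> Pr r (r - d)%N * Pr d d = Pr r d * Pr (r - d)%N (r - d)%N.
Proof.
move=> dr.
have e1 := Psplit d (leq_subr d r); rewrite subnK // subKn // in e1.
have e2 := Psplit (r - d)%N dr; rewrite subnKC // in e2.
have := e1; rewrite e2 mulnC => /eqP.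
rewrite -!mulrA [_ ^+ _ * Pr d d]mulrC [_ ^+ _ * Pr _ _]mulrC !mulrA.
by rewrite (can2_eq (mulfK _) (divfK _)) ?expf_neq0 // mulfK ?expf_neq0 // => /eqP ->.
Qed.

Lemma NC_id n r d : (d <= r)%N -> (r <= n)%N -> Pr d d != 0 ->
  x ^+ (d * d) * (Pr r d / Pr d d) * (Pr (n - r)%N d / Pr d d) *
   (Pr (r - d)%N (r - d)%N * Pp r (r - d)%N d) = Pr r (r - d)%N * Pp n r d.
Proof.
move=> dr rn nz.
rewrite !Pshift ?leq_subr // subKn //.
have -> : x ^+ (r * d) = x ^+ (d * d) * x ^+ ((r - d)%N * d).
  by rewrite -exprD -mulnDl subnKC.
have hA : Pr r (r - d)%N = Pr r d * Pr (r - d)%N (r - d)%N / Pr d d.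
  by rewrite -Psym // mulfK.
rewrite hA; field; done.
Qed.
End Alg.

Lemma bigminn_le_seq (I : eqType) (s : seq I) (P : pred I) (F : I -> nat) x0 j :
  j \in s -> P j -> (\big[minn/x0]_(i <- s | P i) F i <= F j)%N.
Proof.
elim: s => // a s IH; rewrite inE big_cons => /orP[/eqP -> -> | js Pj].
  exact: geq_minl.
case: (P a); last exact: IH.
by apply: leq_trans (geq_minr _ _) (IH js Pj).
Qed.

Lemma bigminn_le (I : finType) (A : {pred I}) (P : pred I) (F : I -> nat) x0 j :
  j \in A -> P j -> (\big[minn/x0]_(i in A | P i) F i <= F j)%N.
Proof.
move=> jA Pj; apply: bigminn_le_seq; rewrite ?mem_index_enum //=.
by rewrite jA Pj.
Qed.

Section Greedy.
Variable T : finType.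
Variable E : {set T}.
Variable B : T -> {set T}.

Definition uncov (C : {set T}) := [set x in E | [forall c in C, x \notin B c]].

Lemma double_count (S : {set T}) :
  (\sum_(c in E) #|B c :&: S| = \sum_(x in S) #|[set c in E | x \in B c]|)%N.
Proof.
transitivity (\sum_(c in E) \sum_(x in S) ((x \in B c) : nat))%N.
  apply: eq_bigr => c _.
  transitivity (\sum_(x in S | x \in B c) 1)%N.
    by rewrite -sum1_card; apply: eq_bigl => x; rewrite !inE andbC.
  by rewrite big_mkcondr; apply: eq_bigr => x _; case: (x \in B c).
rewrite exchange_big /=; apply: eq_bigr => x _.
transitivity (\sum_(c in E | x \in B c) 1)%N.
  by rewrite big_mkcondr; apply: eq_bigr => c _; case: (x \in B c).
by rewrite -sum1_card; apply: eq_bigl => c; rewrite !inE.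
Qed.

Lemma exists_good (S : {set T}) : E != finset.set0 ->
  exists2 c, c \in E & (\sum_(x in S) #|[set c in E | x \in B c]| <= #|B c :&: S| * #|E|)%N.
Proof.
case/set0Pn => c0 c0E.
have [c cE cmax] := @arg_maxnP T c0 (mem E) (fun c => #|B c :&: S|) c0E.
exists c => //; rewrite -double_count.
rewrite mulnC -sum_nat_const.
by apply: leq_sum => c' c'E; apply: cmax.
Qed.

Variable R : realFieldType.
Local Open Scope ring_scope.
Variable b : R.
Hypothesis hb : forall x, x \in E -> b <= #|[set c in E | x \in B c]|%:R.
Hypothesis b0 : 0 <= b.
Hypothesis bN : b <= #|E|%:R.

Lemma greedy k : E != finset.set0 ->
  exists2 C : {set T}, (C \subset E) && (#|C| <= k)%N &
    #|uncov C|%:R <= #|E|%:R * (1 - b / #|E|%:R) ^+ k.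
Proof.
move=> En0.
have Npos : 0 < #|E|%:R :> R by rewrite ltr0n card_gt0.
have h01 : 0 <= 1 - b / #|E|%:R.
  by rewrite subr_ge0 ler_pdivrMr // mul1r.
elim: k => [|k [C /andP[CE Ck] IH]].
  exists finset.set0; first by rewrite finset.sub0set cards0.
  by rewrite expr0 mulr1 ler_nat; apply: subset_leq_card; apply/fintype.subsetP => x; rewrite inE => /andP[].
set S := uncov C.
have [c cE hc] := exists_good S En0.
exists (c |: C).
  rewrite finset.subUset finset.sub1set cE CE /= cardsU1; move: Ck; case: (c \notin C) => /=; lia.
have eS : uncov (c |: C) = S :\: B c.
  apply/setP => x; rewrite /S /uncov !inE.
  case: (x \in E); rewrite ?andbF //=.
  apply/forallP/andP => [h|[h1 /forallP h2] c0].
    split; first by move: (h c); rewrite setU11.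
    apply/forallP => c0; apply/implyP => c0C; move: (h c0); rewrite !inE c0C orbT //.
  apply/implyP; rewrite !inE => /orP[/eqP -> // | c0C].
  by move: (h2 c0); rewrite c0C.
have hsum : #|S|%:R * b <= (#|B c :&: S| * #|E|)%N%:R.
  apply: le_trans (_ : (\sum_(x in S) #|[set c in E | x \in B c]|)%:R <= _); last by rewrite ler_nat.
  rewrite natr_sum -sum1_card natr_sum mulr_suml; apply: ler_sum => x xS.
  rewrite mul1r; apply: hb; by move: xS; rewrite inE => /andP[].
have e2 : #|S :\: B c| = (#|S| - #|B c :&: S|)%N.
  by rewrite cardsD finset.setIC.
have le1 : (#|B c :&: S| <= #|S|)%N by rewrite subset_leq_card // finset.subsetIr.
rewrite eS e2 natrB // exprS.
have step : #|S|%:R - #|B c :&: S|%:R <= #|S|%:R * (1 - b / #|E|%:R) :> R.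
  rewrite mulrBr mulr1 lerD2l lerN2 mulrA ler_pdivrMr //.
  by move: hsum; rewrite natrM.
apply: le_trans step _.
rewrite mulrCA [_ * (1 - _)]mulrC; by apply: ler_wpM2l; [exact: h01 | rewrite /S].
Qed.
End Greedy.

Section Real.
Local Open Scope ring_scope.

Lemma final_real (R : realType) (N V : R) : 1 <= V -> V < N ->
  let k := (Num.truncn (ln N / (ln N - ln (N - V)))).+1 in
  k%:R <= (1 - logb N (N - V))^-1 + 1 /\ N * (1 - V / N) ^+ k < 1.
Proof.
move=> V1 VN k.
have N1 : 1 < N by apply: le_lt_trans VN.
have N0 : 0 < N by apply: lt_trans N1.
have NV0 : 0 < N - V by rewrite subr_gt0.
have a0 : 0 < ln N by apply: ln_gt0.
have ca : ln (N - V) < ln N.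
  by rewrite ltr_ln ?posrE // ltrBlDr ltrDl; apply: lt_le_trans V1.
have ac0 : 0 < ln N - ln (N - V) by rewrite subr_gt0.
set L := ln N / (ln N - ln (N - V)).
have L0 : 0 <= L by rewrite /L divr_ge0 // ltW.
have eL : (1 - logb N (N - V))^-1 = L.
  rewrite /logb /L; field.
  by rewrite ?gt_eqF // ?lt0r_neq0 //; apply/andP; split; rewrite gt_eqF.
split.
  rewrite eL /k -natr1 lerD2r.
  by rewrite truncn_le.
have kL : L < k%:R by rewrite /k; apply: truncnS_gt.
have e1 : 1 - V / N = (N - V) / N by field; rewrite gt_eqF.
rewrite e1.
set y := N * ((N - V) / N) ^+ k.
have y0 : 0 < y by rewrite /y mulr_gt0 // exprn_gt0 // divr_gt0.
have ly : ln y = ln N - (ln N - ln (N - V)) * k%:R.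
  rewrite /y lnM ?posrE ?exprn_gt0 ?divr_gt0 // lnXn ?divr_gt0 //.
  rewrite ln_div ?posrE // -mulr_natr; ring.
have lyn : ln y < 0.
  rewrite ly subr_lt0 -ltr_pdivrMl //.
  by move: kL; rewrite /L mulrC.
rewrite ltNge; apply/negP => y1.
by move: (ln_ge0 y1); rewrite leNgt lyn.
Qed.

End Real.

Section Glue.
Variable R : realType.
Variable F : finFieldType.
Local Open Scope ring_scope.
Local Notation q := #|F|.
Local Notation x := (#|F|%:R : R).

Lemma q_gt1 : (1 < q)%N.
Proof. by apply/card_gt1P; exists 0, 1; split => //; rewrite eq_sym oner_neq0. Qed.

Lemma x_neq0 : x != 0.
Proof. by rewrite pnatr_eq0 -lt0n (ltnW q_gt1). Qed.

Lemma natr_Pp t a m : (a + m <= t)%N ->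
  ((\prod_(j < m) (q ^ t - q ^ (a + j)))%N%:R : R) = Pp x t a m.
Proof.
move=> h; rewrite natr_prod; apply: eq_bigr => j _.
rewrite natrB ?natrX // leq_pexp2l ?(ltnW q_gt1) //.
by have := ltn_ord j; lia.
Qed.

Lemma natr_Pr t m : (m <= t)%N ->
  ((\prod_(j < m) (q ^ t - q ^ j))%N%:R : R) = Pr x t m.
Proof.
move=> h; rewrite natr_prod; apply: eq_bigr => j _.
rewrite natrB ?natrX // leq_pexp2l ?(ltnW q_gt1) //.
by have := ltn_ord j; lia.
Qed.

Lemma prodP_gt0 t a m : (a + m <= t)%N ->
  (0 < \prod_(j < m) (q ^ t - q ^ (a + j)))%N.
Proof.
move=> h; apply: prodn_gt0 => j; rewrite subn_gt0 ltn_exp2l ?q_gt1 //.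
by have := ltn_ord j; lia.
Qed.

Lemma prodR_gt0 t m : (m <= t)%N -> (0 < \prod_(j < m) (q ^ t - q ^ j))%N.
Proof.
move=> h; apply: prodn_gt0 => j; rewrite subn_gt0 ltn_exp2l ?q_gt1 //.
by have := ltn_ord j; lia.
Qed.

Lemma gauss_Pr m k : gauss_binom R q m k = Pr x m k / Pr x k k.
Proof. by rewrite /gauss_binom prodf_div. Qed.

Lemma NC_le n r (U : 'M[F]_n) d : U \in Er F n r -> (d <= r)%N -> (r + d <= n)%N ->
  NC R q n r d <= #|Sd r U d|%:R /\ 0 < NC R q n r d.
Proof.
move=> UE dr rdn.
have rn : (r <= n)%N by lia.
have le := Xd_le UE dr.
rewrite card_Xd // in le.
have FdR : (Fd F r d)%:R = Pr x (r - d) (r - d) * Pp x r (r - d) d :> R.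
  by rewrite /Fd natrM natr_Pr // natr_Pp // subnK.
have Fd0 : (0 < Fd F r d)%N.
  by rewrite /Fd muln_gt0 prodR_gt0 // prodP_gt0 // subnK.
have Xd0 : (0 < \prod_(j < r - d) (q ^ r - q ^ j) * \prod_(j < d) (q ^ n - q ^ (r + j)))%N.
  by rewrite muln_gt0 prodR_gt0 ?leq_subr // prodP_gt0.
have XdR : ((\prod_(j < r - d) (q ^ r - q ^ j) * \prod_(j < d) (q ^ n - q ^ (r + j)))%N%:R : R)
   = Pr x r (r - d) * Pp x n r d.
  by rewrite natrM natr_Pr ?leq_subr // natr_Pp.
have Pdd : Pr x d d != 0.
  by rewrite -natr_Pr // pnatr_eq0 -lt0n prodR_gt0.
have eNC : NC R q n r d * (Fd F r d)%:R = Pr x r (r - d) * Pp x n r d.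
  by rewrite /NC !gauss_Pr FdR NC_id // x_neq0.
have FdRp : 0 < (Fd F r d)%:R :> R by rewrite ltr0n.
split.
  rewrite -(ler_pM2r FdRp) eNC -XdR -natrM ler_nat; exact: le.
by rewrite -(pmulr_lgt0 _ FdRp) eNC -XdR ltr0n.
Qed.

Lemma card_ball n r (U : 'M[F]_n) t :
  #|[set c in Er F n r | (dI U c <= t)%N]| = (\sum_(0 <= d < t.+1) #|Sd r U d|)%N.
Proof.
elim: t => [|t IH].
  rewrite big_nat1; apply: eq_card => c; rewrite !inE leqn0; done.
rewrite big_nat_recr //= -IH.
rewrite -(cardsID [set c in Er F n r | (dI U c <= t)%N] [set c in Er F n r | (dI U c <= t.+1)%N]).
congr (_ + _)%N; apply: eq_card => c; rewrite !inE.
  by case: (c \in Er F n r) => //=; case: (ltngtP (dI U c) t) => // h; lia.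
by case: (c \in Er F n r) => //=; case: (ltngtP (dI U c) t.+1) => // h; lia.
Qed.
End Glue.

Lemma bigminn_le_in (I : finType) (A : {pred I}) (F : I -> nat) x0 j :
  j \in A -> (\big[minn/x0]_(i in A) F i <= F j)%N.
Proof.
move=> jA; apply: bigminn_le_seq; rewrite ?mem_index_enum //=.
Qed.

Theorem proposition8 (R : realType) (F : finFieldType) (n r rho : nat) :
  (r <= n./2)%N -> (0 < rho)%N -> (rho < r)%N ->
  let q := #|F| in
  let G := gauss_binom R q n r in
  ((KC F n r rho)%:R <=
     (1 - logb G (G - VC R q n r rho))^-1 + 1)%R.
Proof.
move=> rh rho0 rhor; cbv zeta.
have rr : (r + r <= n)%N by move: rh; rewrite geq_half_double -addnn.
have rn : (r <= n)%N by lia.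
have cE := card_Er F n r.
have Pnr0 := prodR_gt0 F rn.
have Prr0 := prodR_gt0 F (leqnn r).
have E0 : (0 < #|Er F n r|)%N.
  by move: Pnr0; rewrite -cE muln_gt0 => /andP[].
set N := ((#|Er F n r|)%:R : R)%R.
have eG : gauss_binom R #|F| n r = N.
  rewrite gauss_Pr -natr_Pr // -natr_Pr // -cE natrM mulfK //.
  by rewrite pnatr_eq0 -lt0n.
rewrite eG.
set V := VC R #|F| n r rho.
have ballV : forall U, U \in Er F n r ->
   (V <= #|[set c in Er F n r | (dI U c <= rho)%N]|%:R)%R.
  move=> U UE; rewrite card_ball natr_sum /V /VC !big_nat.
  apply: ler_sum => d /andP[_ hd].
  have dr : (d <= r)%N by lia.
  have rd : (r + d <= n)%N by lia.
  by have [h _] := NC_le R UE dr rd.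
have [U0 U0E] : exists U0, U0 \in Er F n r.
  by move: E0; rewrite card_gt0 => /set0Pn.
have NC0 : forall d, (d <= r)%N -> (0 < NC R #|F| n r d)%R.
  move=> d dr; have rd : (r + d <= n)%N by lia.
  by have [_ h] := NC_le R U0E dr rd.
have V1 : (1 <= V)%R.
  have e0 : NC R #|F| n r 0 = 1%R.
    by rewrite /NC /gauss_binom !big_ord0 expr0 !mulr1.
  rewrite /V /VC big_ltn // e0 lerDl big_nat; apply: sumr_ge0 => d /andP[_ hd].
  by apply: ltW; apply: NC0; lia.
have VN : (V < N)%R.
  have S1 : (\sum_(0 <= d < r.+1) NC R #|F| n r d <= N)%R.
    have S0 : (\sum_(0 <= d < r.+1) NC R #|F| n r d <=
        (#|[set c in Er F n r | (dI U0 c <= r)%N]|)%:R :> R)%R.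
      rewrite card_ball natr_sum !big_nat; apply: ler_sum => d /andP[_ hd].
      have dr : (d <= r)%N by lia.
      have rd : (r + d <= n)%N by lia.
      by have [h _] := NC_le R U0E dr rd.
    apply: le_trans S0 _.
    rewrite ler_nat; apply: subset_leq_card; apply/fintype.subsetP => c.
    by rewrite inE => /andP[].
  have S2 : (V + NC R #|F| n r r <= \sum_(0 <= d < r.+1) NC R #|F| n r d)%R.
    rewrite (big_cat_nat _ (n := rho.+1)) //=; last by lia.
    rewrite lerD2l big_nat_recr //=.
    rewrite -[X in (X <= _)%R]add0r lerD2r big_nat; apply: sumr_ge0 => d /andP[_ hd].
    by apply: ltW; apply: NC0; lia.
  apply: lt_le_trans (le_trans S2 S1).
  by rewrite ltrDl NC0.
have [kB kN] := final_real V1 VN.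
set k := (Num.Def.trunc _).+1 in kB kN.
pose B := fun c : 'M[F]_n => [set W in Er F n r | (dI W c <= rho)%N].
have hb : forall U, U \in Er F n r -> (V <= #|[set c in Er F n r | U \in B c]|%:R)%R.
  move=> U UE; apply: le_trans (ballV U UE) _; rewrite ler_nat.
  apply: eq_leq; apply: eq_card => c; rewrite /B !inE; move: UE; rewrite inE => -> /=; done.
have b0 : (0 <= V)%R by apply: le_trans V1.
have bN : (V <= N)%R by apply: ltW.
have En0 : Er F n r != finset.set0 by apply/set0Pn; exists U0.
have [C /andP[CE Ck] hu] := greedy hb b0 bN k En0.
have u0 : uncov (Er F n r) B C = finset.set0.
  apply/eqP; rewrite -cards_eq0 -leqn0 -ltnS -(ltr_nat R).
  by apply: le_lt_trans hu kN.
have cov : forall U, U \in Er F n r -> exists2 c, c \in C & (dI U c <= rho)%N.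
  move=> U UE; have : U \notin uncov (Er F n r) B C by rewrite u0 inE.
  rewrite /uncov inE UE /= negb_forall_in => /existsP[c /andP[cC]].
  by rewrite negbK inE => /andP[_ h]; exists c.
have Cn0 : C != finset.set0.
  apply/negP => /eqP C0; have [c] := cov U0 U0E; by rewrite C0 inE.
have covC : (covrad r C <= rho)%N.
  rewrite /covrad; apply/bigmax_leqP => U UE.
  have [c cC h] := cov U UE.
  by apply: leq_trans (bigminn_le_in _ _ cC) h.
have KCle : (KC F n r rho <= #|C|)%N.
  rewrite /KC; apply: bigminn_le; first by rewrite powersetE.
  by rewrite Cn0 covC.
apply: le_trans kB; rewrite ler_nat.
exact: leq_trans KCle Ck.
Qed.
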